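(* Let $d\ge1$, $\beta>0$, $\theta:[0,\infty)\to[0,\infty)$ continuous with $\theta(x)>0$ for $x>0$ and $h_\pm<\infty$; $\mu>0$ for bosons, $\mu\in\mathbb{R}$ for fermions. Let $\vec K^L\sim\mathcal{P}^L_\pm$ independently over $L$. There exists a constant $c=c(\theta)$ such that almost surely $$\limsup_{L\to\infty}\max_{\vec u\in B_{\vec1}(L)}\frac{R^L_{\vec u}(\vec K^L)}{(\log L)^{1/d}}\le c.$$
   Context: Put $q_{\vec n}^L=e^{-\beta(\theta(\|\vec n\|/L)+\mu)}$. Bosons: under $\mathcal{P}^L_+$ the $K_{\vec n}$, $\vec n\in\mathbb{Z}^d$, are independent with $\mathbb{P}(K_{\vec n}=k)=(1-q^L_{\vec n})(q^L_{\vec n})^k$, $k\ge0$. Fermions: independent $\{0,1\}$-valued with $\mathbb{P}(K_{\vec n}=1)=q^L_{\vec n}/(1+q^L_{\vec n})$. $h_\pm=\int_{\mathbb{R}^d}\big(\mp\log(1\mp e^{-\beta(\theta(\|\vec y\|)+\mu)})+\beta(\theta(\|\vec y\|)+\mu)\frac{e^{-\beta(\theta(\|\vec y\|)+\mu)}}{1\mp e^{-\beta(\theta(\|\vec y\|)+\mu)}}\big)d\vec y$. $B_{\vec u}(s)=\{\vec n\in\mathbb{Z}^d:u_i\le n_i\le u_i+s-1\ \forall i\}$, $\vec k_{\vec u}(s)=(k_{\vec n})_{\vec n\in B_{\vec u}(s)}$, $R^L_{\vec u}(\vec k)=\inf\{s\ge1:\vec k_{\vec u}(s)\ne\vec k_{\vec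 v}(s)\ \forall\vec v\ne\vec u,\ \vec v\in B_{\vec1}(L)\}$. *)

(* Defs.v *)
From HB Require Import structures.
From mathcomp Require Import all_boot all_order all_algebra.
From mathcomp Require Import all_classical all_reals all_analysis.
Set Implicit Arguments. Unset Strict Implicit. Unset Printing Implicit Defensive.
Import Order.TTheory GRing.Theory Num.Theory.
Import numFieldNormedType.Exports.
Local Open Scope classical_set_scope.
Local Open Scope ring_scope.

Definition Zd (d : nat) := {ffun 'I_d -> int}.

Definition Zd_norm (R : realType) (d : nat) (n : Zd d) : R :=
  Num.sqrt (\sum_(i < d) ((n i)%:~R) ^+ 2).

Inductive stat := Boson | Fermion.

Definition qL (R : realType) (d : nat) (beta mu : R) (theta : R -> R)
  (L : nat) (n : Zd d) : R :=
  expR (- (beta * (theta (Zd_norm R n / L%:R) + mu))).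

(* the one-site law of K_n under P^L_+ (bosons) / P^L_- (fermions) *)
Definition site_pmf (R : realType) (st : stat) (q : R) (k : nat) : R :=
  match st with
  | Boson => (1 - q) * q ^+ k
  | Fermion => if k == 0%N then 1 / (1 + q)
               else if k == 1%N then q / (1 + q) else 0
  end.

Definition h_integrand (R : realType) (st : stat) (beta mu : R)
  (theta : R -> R) (r : R) : R :=
  let x := beta * (theta r + mu) in
  match st with
  | Boson => - ln (1 - expR (- x)) + x * expR (- x) / (1 - expR (- x))
  | Fermion => ln (1 + expR (- x)) + x * expR (- x) / (1 + expR (- x))
  end.

(* iterated Lebesgue integral over R^n of a function of n real variables
   (given as a list); for nonnegative integrands this is the Lebesgue
   integral over R^n by Tonelli *)
Fixpoint iter_integral (R : realType) (n : nat)
  (f : seq R -> \bar R) : \bar R :=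
  match n with
  | 0%N => f [::]
  | n'.+1 => (\int[@lebesgue_measure R]_x iter_integral n' (fun s => f (x :: s)))%E
  end.

Definition seq_norm (R : realType) (y : seq R) : R :=
  Num.sqrt (\sum_(a <- y) a ^+ 2).

Definition h_pm (R : realType) (st : stat) (d : nat) (beta mu : R)
  (theta : R -> R) : \bar R :=
  iter_integral d (fun y => (h_integrand st beta mu theta (seq_norm y))%:E).

Definition mutually_independent (dT : measure_display) (T : measurableType dT)
  (R : realType) (P : probability T R) (I : eqType) (X : I -> T -> nat) :=
  forall (s : seq I), uniq s -> forall (A : I -> set nat),
    P (\bigcap_(i in [set` s]) (X i @^-1` A i)) =
    (\prod_(i <- s) P (X i @^-1` A i))%E.

Definition box (d : nat) (u : Zd d) (s : nat) : set (Zd d) :=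
  [set n | forall i, (u i <= n i)%R /\ (n i <= u i + s%:Z - 1)%R].

Definition one_vec (d : nat) : Zd d := [ffun _ => 1%Z].

Definition zshift (d : nat) (u j : Zd d) : Zd d := [ffun i => u i + j i].

Definition same_window (d : nat) (k : Zd d -> nat) (u v : Zd d) (s : nat) :=
  forall j : Zd d, (forall i, (0 <= j i)%R /\ (j i <= s%:Z - 1)%R) ->
    k (zshift u j) = k (zshift v j).

(* R^L_u(k) (inf of the empty set = +oo) *)
Definition RL (R : realType) (d : nat) (L : nat) (u : Zd d)
  (k : Zd d -> nat) : \bar R :=
  ereal_inf [set (s%:R)%:E | s in
    [set s : nat | (1 <= s)%N /\
       forall v, box (one_vec d) L v -> v <> u -> ~ same_window k u v s]].

Definition RL_ratio (R : realType) (d : nat) (L : nat) (k : Zd d -> nat)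
  : \bar R :=
  (ereal_sup [set RL R L u k | u in box (one_vec d) L] *
   ((ln (L%:R : R)) `^ (d%:R^-1))^-1%:E)%E.

(* Main.v *)
Require Import Defs.
From HB Require Import structures.
From mathcomp Require Import all_boot all_order all_algebra.
From mathcomp Require Import all_classical all_reals all_analysis.
From mathcomp Require Import ring lra zify.
Import Order.TTheory GRing.Theory Num.Theory.
Import numFieldNormedType.Exports.
Local Open Scope classical_set_scope.
Local Open Scope ring_scope.



Section Indep.
Context (R : realType) (d : nat) (dT : measure_display) (T : measurableType dT)
  (P : probability T R) (X : Zd d -> T -> nat).
Hypothesis mX : forall n, measurable_fun setT (X n).
Hypothesis indX : forall s : seq (Zd d), uniq s -> forall A : Zd d -> set nat,
  P (\bigcap_(i in [set` s]) (X i @^-1` A i)) = (\prod_(i <- s) P (X i @^-1` A i))%E.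

Lemma mpre n (A : set nat) : measurable (X n @^-1` A).
Proof. by rewrite -[X n @^-1` A]setTI; apply: mX. Qed.

Lemma finP (U : set T) : measurable U -> P U \is a fin_num.
Proof. by move=> mU; apply: fin_num_measure. Qed.

Lemma bigI_mem (I : eqType) (r : seq I) (F : I -> set T) t :
  (\big[setI/setT]_(i <- r) F i) t <-> (forall i, i \in r -> F i t).
Proof.
elim: r => [|a r IH]; rewrite ?big_nil ?big_cons; first by split.
split.
  move=> [Fa /IH H] i; rewrite inE => /orP[/eqP->//|]; exact: H.
move=> H; split; first by apply: H; rewrite inE eqxx.
by apply/IH => i ir; apply: H; rewrite inE ir orbT.
Qed.

Lemma bigI_meas (I : Type) (r : seq I) (F : I -> set T) :
  (forall i, measurable (F i)) -> measurable (\big[setI/setT]_(i <- r) F i).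
Proof.
move=> mF; elim: r => [|a r IH]; rewrite ?big_nil ?big_cons; first exact: measurableT.
exact: measurableI.
Qed.

Definition SpecE (s : seq (Zd d)) (A : Zd d -> set nat) : set T :=
  \big[setI/setT]_(x <- s) X x @^-1` A x.

Lemma fine_prod (r : seq (Zd d)) (F : Zd d -> set T) :
  (forall i, measurable (F i)) ->
  fine (\prod_(i <- r) P (F i))%E = \prod_(i <- r) fine (P (F i)).
Proof.
move=> mF.
suff -> : (\prod_(i <- r) P (F i))%E = (\prod_(i <- r) fine (P (F i)))%:E by [].
elim: r => [|a r IH]; rewrite ?big_nil ?big_cons //.
by rewrite IH EFinM fineK //; apply: finP.
Qed.

Lemma SpecE_prob s A : uniq s ->
  fine (P (SpecE s A)) = \prod_(x <- s) fine (P (X x @^-1` A x)).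
Proof.
move=> us; rewrite -fine_prod; last by move=> i; apply: mpre.
rewrite -indX //; congr (fine (P _)); apply/seteqP; split => t.
  by move/bigI_mem => H i /= si; apply: H.
by move=> H; apply/bigI_mem => i si; apply: H.
Qed.

Definition S0 (b : bool) : set nat := [set k | (k == 0%N) = b].
Definition g (x : Zd d) (b : bool) : R := fine (P (X x @^-1` S0 b)).
Definition fpair (a b : Zd d) : R := g a true * g b true + g a false * g b false.
Definition pev (a b : Zd d) : set T := [set t | (X a t == 0%N) = (X b t == 0%N)].
Definition PairE (ps : seq (Zd d * Zd d)) : set T :=
  \big[setI/setT]_(p <- ps) pev p.1 p.2.

Lemma pev_meas a b : measurable (pev a b).
Proof.
have -> : pev a b = (X a @^-1` S0 true `&` X b @^-1` S0 true) `|`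
                    (X a @^-1` S0 false `&` X b @^-1` S0 false).
  apply/seteqP; split => t /=; rewrite /pev /S0 /=.
    by case: (X a t == 0%N) => <-; [left|right].
  by case=> -[-> ->].
by apply: measurableU; apply: measurableI; apply: mpre.
Qed.

Lemma PairE_meas ps : measurable (PairE ps).
Proof. by apply: bigI_meas => p; apply: pev_meas. Qed.

Definition upd (a b : Zd d) (c : bool) (A : Zd d -> set nat) (x : Zd d) : set nat :=
  if (x == a) || (x == b) then S0 c else A x.

Lemma PairE_prob ps s A :
  uniq (flatten [seq [:: p.1; p.2] | p <- ps] ++ s) ->
  fine (P (PairE ps `&` SpecE s A)) =
  \prod_(p <- ps) fpair p.1 p.2 * \prod_(x <- s) fine (P (X x @^-1` A x)).
Proof.
elim: ps s A => [|[a b] ps IH] s A /=.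
  by move=> us; rewrite /PairE !big_nil setTI mul1r SpecE_prob.
move=> /and3P[aN bN U].
have U' : uniq (flatten [seq [:: p.1; p.2] | p <- ps] ++ a :: b :: s).
  set F := flatten _.
  have pe : perm_eq (F ++ a :: b :: s) ([:: a; b] ++ F ++ s).
    by rewrite (perm_catCA F [:: a; b] s).
  by rewrite (perm_uniq pe) /= aN bN U.
have naS : a \notin s.
  by apply: contra aN; rewrite inE !mem_cat => ->; rewrite !orbT.
have nbS : b \notin s by apply: contra bN; rewrite mem_cat => ->; rewrite orbT.
have nab : a != b by apply: contra aN; rewrite inE => ->.
have E : PairE ((a, b) :: ps) `&` SpecE s A =
   (PairE ps `&` SpecE (a :: b :: s) (upd a b true A)) `|`
   (PairE ps `&` SpecE (a :: b :: s) (upd a b false A)).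
  have sE : forall c, SpecE s (upd a b c A) = SpecE s A.
    move=> c; rewrite /SpecE; apply: eq_big_seq => x xs.
    rewrite /upd; case: ifP => // /orP[] /eqP ex; subst x.
      by rewrite xs in naS.
    by rewrite xs in nbS.
  have ua : forall c, upd a b c A a = S0 c by move=> c; rewrite /upd eqxx.
  have ub : forall c, upd a b c A b = S0 c by move=> c; rewrite /upd eqxx orbT.
  rewrite /PairE /SpecE big_cons !big_cons -!/(SpecE s _) !sE !ua !ub.
  apply/seteqP; split => t.
    move=> [[]]; rewrite /pev /S0 /= => ab pst sst.
    by case: (X a t == 0%N) ab => ab; [left|right].
  by case=> -[pst [/= at_ [/= bt sst]]]; split => //; rewrite /pev /= at_ bt.
have disj : (PairE ps `&` SpecE (a :: b :: s) (upd a b true A)) `&`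
   (PairE ps `&` SpecE (a :: b :: s) (upd a b false A)) = set0.
  apply/seteqP; split => t //=.
  rewrite /SpecE !big_cons /upd eqxx /= /S0 /=.
  by move=> [[_ [-> _]] [_ [//]]].
have mB : forall c, measurable (PairE ps `&` SpecE (a :: b :: s) (upd a b c A)).
  by move=> c; apply: measurableI; [apply: PairE_meas|apply: bigI_meas => x; apply: mpre].
rewrite E measureU; [|exact: mB|exact: mB|exact: disj].
rewrite fineD; try by apply: finP.
rewrite (IH _ _ U') (IH _ _ U') !big_cons /upd eqxx /= eqxx /= orbT.
have sE2 : forall c, \prod_(x <- s) fine (P (X x @^-1`
     (if (x == a) || (x == b) then S0 c else A x))) =
     \prod_(x <- s) fine (P (X x @^-1` A x)).
  move=> c; apply: eq_big_seq => x xs.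
  case: ifP => // /orP[] /eqP ex; subst x.
    by rewrite xs in naS.
  by rewrite xs in nbS.
rewrite !sE2 /fpair /g; ring.
Qed.

Lemma PairE_le ps (gam : R) :
  uniq (flatten [seq [:: p.1; p.2] | p <- ps]) ->
  (forall p, p \in ps -> 0 <= fpair p.1 p.2 <= gam) ->
  fine (P (PairE ps)) <= gam ^+ size ps.
Proof.
move=> U H.
have := @PairE_prob ps [::] (fun=> setT); rewrite cats0 => /(_ U).
rewrite /SpecE !big_nil setIT mulr1 => ->.
have -> : gam ^+ size ps = \prod_(p <- ps) gam.
  by elim: (ps) => [|p ps' IH]; rewrite ?big_nil ?big_cons ?expr0 // /= exprS IH.
rewrite big_seq_cond [X in _ <= X]big_seq_cond.
apply: ler_prod => p /andP[pin _]; exact: H.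
Qed.

End Indep.



Lemma flat_uniq (A B : eqType) (f g : A -> B) (l : seq A) :
  uniq l -> injective f -> injective g ->
  (forall j j', j \in l -> j' \in l -> f j != g j') ->
  uniq (flatten [seq [:: p.1; p.2] | p <- [seq (f j, g j) | j <- l]]).
Proof.
move=> ul fi gi cr.
have memf : forall (l' : seq A) y,
  y \in flatten [seq [:: p.1; p.2] | p <- [seq (f j, g j) | j <- l']] ->
  exists2 j, j \in l' & (y = f j \/ y = g j).
  elim=> [|x l' IH] y //=; rewrite !inE => /orP[/eqP->|/orP[/eqP->|/IH[j jl H]]].
  - by exists x; [rewrite inE eqxx|left].
  - by exists x; [rewrite inE eqxx|right].
  - by exists j => //; rewrite inE jl orbT.
elim: l ul cr => [|x l IH] //= /andP[xl ul] cr.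
have cr' : forall j j', j \in l -> j' \in l -> f j != g j'.
  by move=> j j' jl j'l; apply: cr; rewrite inE ?jl ?j'l orbT.
rewrite IH // andbT !inE negb_or -andbA; apply/and3P; split.
- by apply: cr; rewrite inE eqxx.
- apply/negP => /memf[j jl [/fi ej|ej]].
    by subst j; rewrite jl in xl.
  by move: (cr x j); rewrite !inE eqxx jl orbT ej eqxx => /(_ isT isT).
- apply/negP => /memf[j jl [ej|/gi ej]].
    by move: (cr j x); rewrite !inE eqxx jl orbT ej eqxx => /(_ isT isT).
  by subst j; rewrite jl in xl.
Qed.

Section Comb.
Context (d s : nat).
Definition toZ (j : {ffun 'I_d -> 'I_s}) : Zd d := [ffun i => ((j i : nat)%:Z)].
Definition zs (u : Zd d) (j : {ffun 'I_d -> 'I_s}) : Zd d := zshift u (toZ j).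

Lemma zs_inj (u : Zd d) : injective (zs u).
Proof.
move=> j j' /ffunP E; apply/ffunP => i; have := E i; rewrite !ffunE => /addrI.
by move=> [] h; apply: ord_inj.
Qed.

Definition Jset (u v : Zd d) (i0 : 'I_d) : {set {ffun 'I_d -> 'I_s}} :=
  [set j : {ffun 'I_d -> 'I_s} | ~~ odd (j i0 %/ `|u i0 - v i0|%N)%N].

Lemma cross (u v : Zd d) (i0 : 'I_d) (j j' : {ffun 'I_d -> 'I_s}) : u i0 != v i0 -> j \in Jset u v i0 -> j' \in Jset u v i0 ->
  zs u j != zs v j'.
Proof.
move=> uv; rewrite !inE => ej ej'; apply/eqP => /ffunP /(_ i0); rewrite !ffunE => E.
set a := `|u i0 - v i0|%N in ej ej'.
have a0 : (0 < a)%N by rewrite absz_gt0 subr_eq0.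
have : (j i0 : nat) = (j' i0 + a)%N \/ (j' i0 : nat) = (j i0 + a)%N by rewrite /a; lia.
have dv : forall x, ((x + a) %/ a = x %/ a + 1)%N.
  by move=> x; rewrite divnDr ?dvdnn // divnn a0.
case=> h.
  by move: ej; rewrite h dv addn1 /= negbK (negbTE ej').
by move: ej'; rewrite h dv addn1 /= negbK (negbTE ej).
Qed.

Lemma J_card (u v : Zd d) (i0 : 'I_d) : u i0 != v i0 -> (s ^ d <= 2 * #|Jset u v i0|)%N.
Proof.
move=> uv.
set a := `|u i0 - v i0|%N.
have a0 : (0 < a)%N by rewrite absz_gt0 subr_eq0.
set J := Jset u v i0.
pose sub (j : {ffun 'I_d -> 'I_s}) (i : 'I_d) : 'I_s :=
  Ordinal (leq_ltn_trans (leq_subr a (j i)) (ltn_ord (j i))).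
pose phi (j : {ffun 'I_d -> 'I_s}) : {ffun 'I_d -> 'I_s} :=
  [ffun i => if i == i0 then sub j i else j i].
have dv : forall x, ((x + a) %/ a = x %/ a + 1)%N.
  by move=> x; rewrite divnDr ?dvdnn // divnn a0.
have ge : forall j, j \in ~: J -> (a <= j i0)%N.
  move=> j; rewrite !inE negbK; case: (ltnP (j i0) a) => // h.
  by rewrite divn_small.
have inj : {in ~: J &, injective phi}.
  move=> j j' jJ j'J /ffunP E; apply/ffunP => i.
  have := E i; rewrite !ffunE; case: eqP => [->|//] /(congr1 val) /= h.
  apply: ord_inj; have h1 := subnK (ge _ jJ); have h2 := subnK (ge _ j'J); rewrite -h1 -h2 h //.
have sub_ : (phi @: ~: J) \subset J.
  apply/fintype.subsetP => _ /imsetP[j jJ ->]; rewrite !inE ffunE eqxx /=.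
  have := ge _ jJ; move: jJ; rewrite !inE negbK => oj aj.
  move: oj; rewrite -{1}(subnK aj) dv addn1 /=; by case: odd.
have := subset_leq_card sub_; rewrite card_in_imset // => h.
have := cardsC J; rewrite card_ffun !card_ord => h2.
by rewrite -h2 mul2n -addnn leq_add2l.
Qed.

Definition psJ (u v : Zd d) (i0 : 'I_d) : seq (Zd d * Zd d) :=
  [seq (zs u j, zs v j) | j <- enum (Jset u v i0)].

Lemma psJ_uniq (u v : Zd d) (i0 : 'I_d) : u i0 != v i0 ->
  uniq (flatten [seq [:: p.1; p.2] | p <- psJ u v i0]).
Proof.
move=> uv; apply: flat_uniq; [exact: enum_uniq|exact: zs_inj|exact: zs_inj|].
by move=> j j'; rewrite !mem_enum; apply: cross.
Qed.

Lemma psJ_size (u v : Zd d) (i0 : 'I_d) : size (psJ u v i0) = #|Jset u v i0|.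
Proof. by rewrite size_map cardE. Qed.

End Comb.



Lemma pmf_bound (R : realType) st (qlo qhi : R) : 0 < qlo -> qlo <= qhi ->
  (st = Boson -> qhi < 1) ->
  exists2 del : R, 0 < del &
    forall q, qlo <= q <= qhi -> del <= site_pmf st q 0 <= 1 - del.
Proof.
move=> q0 qlh hB; case: st hB => hB.
  have h1 := hB erefl.
  exists (Num.min (1 - qhi) qlo); first by rewrite lt_min q0 subr_gt0 h1.
  move=> q /andP[ql qh]; rewrite /site_pmf expr0 mulr1.
  have m1 : Num.min (1 - qhi) qlo <= 1 - qhi by rewrite ge_min lexx.
  have m2 : Num.min (1 - qhi) qlo <= qlo by rewrite ge_min lexx orbT.
  apply/andP; split; lra.
exists (Num.min (1 / (1 + qhi)) (qlo / (1 + qlo))).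
  by rewrite lt_min !divr_gt0 //; lra.
move=> q /andP[ql qh]; rewrite /site_pmf /=.
have q0' : 0 < q by lra.
set a := 1 / (1 + qhi); set b := qlo / (1 + qlo).
have m1 : Num.min a b <= a by rewrite ge_min lexx.
have m2 : Num.min a b <= b by rewrite ge_min lexx orbT.
have h1 : a <= 1 / (1 + q).
  rewrite /a !div1r lef_pV2 ?posrE; lra.
have h2 : b <= q / (1 + q).
  rewrite /b ler_pdivrMr; last lra.
  rewrite mulrAC ler_pdivlMr; last lra.
  nra.
have e : 1 - 1 / (1 + q) = q / (1 + q) by field; lra.
apply/andP; split; lra.
Qed.

Lemma powR_d (R : realType) (x : R) (d : nat) : (0 < d)%N -> 0 <= x ->
  (x `^ (d%:R^-1)) ^+ d = x.
Proof.
move=> d0 x0; rewrite -powR_mulrn ?powR_ge0 // -powRrM mulVf ?powRr1 //.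
by rewrite pnatr_eq0 -lt0n.
Qed.



Definition emb (d L : nat) (b : {ffun 'I_d -> 'I_L}) : Zd d :=
  [ffun i => (b i : nat)%:Z + 1].

Lemma emb_inj d L : injective (emb d L).
Proof.
move=> b b' /ffunP E; apply/ffunP => i; have := E i; rewrite !ffunE => /addIr.
by move=> [] h; apply: ord_inj.
Qed.

Lemma box_emb d L u : box (one_vec d) L u -> exists b, u = emb d L b.
Proof.
move=> bx.
have h : forall i, (`|u i - 1|%N < L)%N.
  by move=> i; have := bx i; rewrite /one_vec ffunE; lia.
exists [ffun i => Ordinal (h i)]; apply/ffunP => i; rewrite !ffunE /=.
by have := bx i; rewrite /one_vec ffunE; lia.
Qed.

Lemma norm_bound (R : realType) d L s (b : {ffun 'I_d -> 'I_L})
  (j : {ffun 'I_d -> 'I_s}) : (0 < L)%N -> (s <= L)%N ->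
  0 <= Zd_norm R (zs d s (emb d L b) j) / L%:R <= 2 * d%:R.
Proof.
move=> L0 sL; set n := zs d s (emb d L b) j.
have L0' : 0 < (L%:R : R) by rewrite ltr0n.
have hn : forall i, 0 <= ((n i)%:~R : R) <= 2 * L%:R.
  move=> i; have : (0 <= n i <= (2 * L)%N%:Z)%R.
    rewrite /n /zs /zshift /emb /toZ !ffunE.
    have := ltn_ord (b i); have := ltn_ord (j i); lia.
  move=> /andP[h1 h2]; apply/andP; split; first by rewrite ler0z.
  by rewrite -natrM (_ : ((2 * L)%:R : R) = ((2 * L)%N%:Z)%:~R) // ler_int.
apply/andP; split.
  by rewrite divr_ge0 ?sqrtr_ge0 // ler0n.
rewrite ler_pdivrMr // /Zd_norm.
have s1 : \sum_(i < d) ((n i)%:~R : R) ^+ 2 <= \sum_(i < d) (2 * L%:R) ^+ 2.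
  apply: ler_sum => i _; have /andP[a1 a2] := hn i.
  by apply: lerXn2r; rewrite ?nnegrE //; lra.
rewrite sumr_const card_ord in s1.
have s2 : (2 * L%:R) ^+ 2 *+ d <= (2 * d%:R * L%:R : R) ^+ 2.
  rewrite -mulr_natr.
  have : (d%:R : R) <= d%:R ^+ 2.
    by rewrite -natrX ler_nat; case: d {b j n hn s1} => // d'; rewrite expnS leq_pmulr.
  move=> hd; have : 0 <= (2 * L%:R : R) ^+ 2 by apply: sqr_ge0.
  nra.
have := le_trans s1 s2; rewrite -(ler_sqrt (_ : R)) ?sqr_ge0 // sqrtr_sqr.
rewrite ger0_norm; last by apply: mulr_ge0; [rewrite mulr_ge0 ?ler0n|rewrite ler0n].
by move=> h; apply: (le_trans h); rewrite mulrAC.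
Qed.



Lemma meas_bigU (R : realType) (dT : measure_display) (T : measurableType dT)
  (P : probability T R) (I : finType) (Pr : pred I) (F : I -> set T) :
  (forall i, measurable (F i)) ->
  measurable (\big[setU/set0]_(i | Pr i) F i) /\
  (P (\big[setU/set0]_(i | Pr i) F i) <= \sum_(i | Pr i) P (F i))%E.
Proof.
move=> mF.
apply: (big_ind2 (fun A x => measurable A /\ (P A <= x)%E)).
- by rewrite measure0; split.
- move=> A1 x1 A2 x2 [m1 l1] [m2 l2]; split; first exact: measurableU.
  apply: le_trans (measureU2 _ m1 m2) _; exact: leeD.
- by move=> i _; split.
Qed.

Lemma indep_L (R : realType) d (dT : measure_display) (T : measurableType dT)
  (P : probability T R) (K : nat -> Zd d -> T -> nat) L :
  mutually_independent P (fun i : nat * Zd d => K i.1 i.2) ->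
  forall s : seq (Zd d), uniq s -> forall A : Zd d -> set nat,
  P (\bigcap_(i in [set` s]) (K L i @^-1` A i)) = (\prod_(i <- s) P (K L i @^-1` A i))%E.
Proof.
move=> ind s us A.
have := ind [seq (L, x) | x <- s] _ (fun i => A i.2).
rewrite map_inj_uniq; last by move=> x y [].
move=> /(_ us); rewrite big_map /= => <-.
congr (P _); apply/seteqP; split => t /= H.
  move=> i /= /mapP[x xs ->] /=; exact: H.
by move=> i /= si; apply: (H (L, i)); apply/mapP; exists i.
Qed.

Lemma pair_bound (R : realType) st d (beta mu : R) (theta : R -> R) (del : R)
  (dT : measure_display) (T : measurableType dT) (P : probability T R)
  (K : nat -> Zd d -> T -> nat) L s (b1 b2 : {ffun 'I_d -> 'I_L}) (i0 : 'I_d) :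
  (forall L n, measurable_fun setT (K L n)) ->
  mutually_independent P (fun i : nat * Zd d => K i.1 i.2) ->
  (forall L n k, (0 < L)%N ->
     P (K L n @^-1` [set k]) = (site_pmf st (qL beta mu theta L n) k)%:E) ->
  (0 < L)%N -> (s <= L)%N -> 0 < del ->
  (forall x, 0 <= x <= 2 * d%:R ->
     del <= site_pmf st (expR (- (beta * (theta x + mu)))) 0 <= 1 - del) ->
  emb d L b1 i0 != emb d L b2 i0 ->
  fine (P (PairE d dT T (K L) (psJ d s (emb d L b1) (emb d L b2) i0)))
    <= (1 - del) ^+ #|Jset d s (emb d L b1) (emb d L b2) i0|.
Proof.
move=> mK ind pmf L0 sL del0 Hs uv.
rewrite -psJ_size; apply: (PairE_le _ _ _ _ _ _ (mK L) (indep_L _ _ _ _ _ _ L ind)).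
  exact: psJ_uniq.
have gb : forall (b : {ffun 'I_d -> 'I_L}) j,
    let x := zs d s (emb d L b) j in
    del <= g R d dT T P (K L) x true <= 1 - del /\
    g R d dT T P (K L) x false = 1 - g R d dT T P (K L) x true.
  move=> b j x; split.
    have e0 : S0 true = [set 0%N].
      by apply/seteqP; split => k /=; rewrite /S0 /=; [move/eqP | move=> ->].
    rewrite /g e0 pmf //= /qL; apply: Hs; exact: norm_bound.
  have e1 : K L x @^-1` S0 false = ~` (K L x @^-1` S0 true).
    by apply/seteqP; split => k /=; rewrite /S0 /=; case: (_ == _).
  rewrite /g e1 probability_setC; last exact: (mpre _ _ _ _ (mK L)).
  rewrite -[X in (1 - X)%E](fineK (finP _ _ _ P _ (mpre _ _ _ _ (mK L) x (S0 true)))).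
  by rewrite -EFinB.
move=> p /mapP[j jin ->] /=; rewrite /fpair.
have [/andP[a1 a2] a3] := gb b1 j; have [/andP[b1' b2'] b3] := gb b2 j.
rewrite a3 b3.
set u := g _ _ _ _ _ _ _ true in a1 a2 *; set v := g _ _ _ _ _ _ _ true in b1' b2' *.
have d0 : 0 <= del by lra.
have h1 : v * u <= v * (1 - del) by rewrite ler_wpM2l //; lra.
have h2 : (1 - v) * (1 - u) <= (1 - v) * (1 - del) by rewrite ler_wpM2l //; lra.
have h3 : 0 <= u * v by apply: mulr_ge0; lra.
have h4 : 0 <= (1 - u) * (1 - v) by apply: mulr_ge0; lra.
apply/andP; split; nra.
Qed.

Lemma gam_bound (R : realType) (gam c0 : R) (d L n s : nat) :
  0 < gam < 1 -> (0 < L)%N -> 0 <= ln (L%:R : R) ->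
  4 * d%:R + 4 <= c0 * (- ln gam) -> c0 * ln (L%:R : R) <= s%:R ^+ d ->
  (s ^ d <= 2 * n)%N -> gam ^+ n <= (L%:R ^+ (2 * d + 2))^-1.
Proof.
move=> /andP[g0 g1] L0 lnL0 hc hs hn.
have L0' : 0 < (L%:R : R) by rewrite ltr0n.
have lam0 : 0 < - ln gam by rewrite oppr_gt0 ln_lt0 // g0 g1.
have hn' : s%:R ^+ d <= 2 * (n%:R : R).
  by rewrite -natrX -[2]/(2%:R) -natrM ler_nat.
rewrite -(lnK g0) -expRM_natl -[X in X ^+ _](lnK L0') -expRM_natl -expRN ler_expR.
rewrite natrD natrM.
set lg := ln gam in lam0 hc *; set l := ln _ in lnL0 hs *.
have dd0 : 0 <= (d%:R : R) by rewrite ler0n.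
have c0p : 0 <= c0.
  have : 0 < c0 * - lg by lra.
  by rewrite pmulr_lgt0 // => /ltW.
have h1 : c0 * l * (- lg) <= s%:R ^+ d * (- lg) by rewrite ler_wpM2r //; lra.
have h2 : (4 * d%:R + 4) * l <= c0 * (- lg) * l by rewrite ler_wpM2r.
have h3 : s%:R ^+ d * (- lg) <= 2 * n%:R * (- lg) by rewrite ler_wpM2r //; lra.
nra.
Qed.

Definition psu d s (u v : Zd d) : seq (Zd d * Zd d) :=
  if [pick i | u i != v i] is Some i0 then psJ d s u v i0 else [::].

Lemma G_bound (R : realType) st d (beta mu : R) (theta : R -> R) (del : R)
  (dT : measure_display) (T : measurableType dT) (P : probability T R)
  (K : nat -> Zd d -> T -> nat) L s :
  (forall L n, measurable_fun setT (K L n)) ->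
  mutually_independent P (fun i : nat * Zd d => K i.1 i.2) ->
  (forall L n k, (0 < L)%N ->
     P (K L n @^-1` [set k]) = (site_pmf st (qL beta mu theta L n) k)%:E) ->
  (0 < L)%N -> (s <= L)%N -> 0 < del ->
  (forall x, 0 <= x <= 2 * d%:R ->
     del <= site_pmf st (expR (- (beta * (theta x + mu)))) 0 <= 1 - del) ->
  (forall n, (s ^ d <= 2 * n)%N -> (1 - del) ^+ n <= (L%:R ^+ (2 * d + 2))^-1) ->
  let G := \big[setU/set0]_(bb : ({ffun 'I_d -> 'I_L} * {ffun 'I_d -> 'I_L})%type
            | bb.1 != bb.2) PairE d dT T (K L) (psu d s (emb d L bb.1) (emb d L bb.2)) in
  measurable G /\ (P G <= ((L%:R ^+ 2)^-1)%:E)%E.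
Proof.
move=> mK ind pmf L0 sL del0 Hs Hg G.
have [mG PG] := meas_bigU _ _ _ P _ (fun bb : ({ffun 'I_d -> 'I_L} * {ffun 'I_d -> 'I_L})%type
   => bb.1 != bb.2) (fun bb => PairE d dT T (K L) (psu d s (emb d L bb.1) (emb d L bb.2)))
   (fun bb => PairE_meas _ _ _ _ (mK L) _).
split => //; apply: le_trans PG _.
set bnd : R := (L%:R ^+ (2 * d + 2))^-1.
have each : forall bb : ({ffun 'I_d -> 'I_L} * {ffun 'I_d -> 'I_L})%type, bb.1 != bb.2 ->
    (P (PairE d dT T (K L) (psu d s (emb d L bb.1) (emb d L bb.2))) <= bnd%:E)%E.
  move=> [b1 b2] /= ne; rewrite /psu; case: pickP => [i0 hi0|hn]; last first.
    exfalso; move/negP: ne; apply; apply/eqP/(@emb_inj d L)/ffunP => i.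
    by have := hn i; move/negbFE/eqP.
  rewrite -(fineK (finP _ _ _ P _ (PairE_meas _ _ _ _ (mK L) _))) lee_fin.
  apply: le_trans (pair_bound _ _ _ _ _ _ _ _ _ _ _ _ _ _ _ _ mK ind pmf L0 sL del0 Hs hi0) _.
  by apply: Hg; apply: J_card.
apply: le_trans (lee_sum _ each) _.
rewrite big_mkcond /=.
apply: (@le_trans _ _ (\sum_(i : ({ffun 'I_d -> 'I_L} * {ffun 'I_d -> 'I_L})%type) bnd%:E)%E).
  apply: lee_sum => i _; case: ifP => // _.
  by rewrite lee_fin /bnd invr_ge0 exprn_ge0 ?ler0n.
rewrite sumEFin lee_fin.
rewrite sumr_const card_prod card_ffun !card_ord /bnd -[X in X <= _]mulr_natr.
have L0' : (L%:R : R) != 0 by rewrite pnatr_eq0 -lt0n.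
have e : (L%:R ^+ (2 * d + 2) : R) = L%:R ^+ d * L%:R ^+ d * L%:R ^+ 2.
  by rewrite -!exprD; congr (_ ^+ _); lia.
rewrite e natrM !natrX le_eqVlt; apply/orP; left; apply/eqP.
by field; rewrite L0' expf_neq0.
Qed.

Lemma L_facts (R : realType) (c0 : R) (d : nat) : (0 < d)%N -> 1 <= c0 ->
  forall L : nat, 2 * (c0 * ln (2 * c0) + 1) + expR 1 < L%:R ->
  let y := (ln (L%:R : R)) `^ (d%:R^-1) in
  let s := (Num.truncn (c0 * y)).+1 in
  [/\ 1 <= ln (L%:R : R), 1 <= y, (s <= L)%N,
      c0 * ln (L%:R : R) <= s%:R ^+ d & s%:R <= c0 * y + 1].
Proof.
move=> d0 c01 L hL y s.
have lc : 0 <= ln (2 * c0) by apply: ln_ge0; lra.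
have c0l : 0 <= c0 * ln (2 * c0) by apply: mulr_ge0 => //; lra.
have e1 : 0 < expR (1 : R) by apply: expR_gt0.
have L0 : 0 < (L%:R : R) by lra.
have lnL1 : 1 <= ln (L%:R : R).
  rewrite -[X in X <= _](expRK 1) ler_ln ?posrE //; lra.
have yd : y ^+ d = ln (L%:R : R) by rewrite /y powR_d //; lra.
have y0 : 0 <= y by apply: powR_ge0.
have y1 : 1 <= y by rewrite -(expr_ge1 d0 y0) yd.
have cy0 : 0 <= c0 * y by apply: mulr_ge0 => //; lra.
have s1 : c0 * y < s%:R by apply: truncnS_gt.
have s2 : s%:R <= c0 * y + 1.
  by rewrite /s -addn1 natrD lerD2r truncn_le.
have yl : y <= ln (L%:R : R) by rewrite -yd ler_eXnr.
have c0d : c0 <= c0 ^+ d by rewrite ler_eXnr.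
split => //.
- rewrite -(ler_nat R).
  apply: (le_trans s2).
  have hl : ln (L%:R : R) < L%:R / (2 * c0) + ln (2 * c0).
    have p1 : 0 < L%:R / (2 * c0) by apply: divr_gt0; lra.
    have e : ln (L%:R : R) = ln (L%:R / (2 * c0)) + ln (2 * c0).
      rewrite -lnM ?posrE //; last lra.
      by congr ln; field; lra.
    rewrite e ltrD2r; exact: ln_sublinear.
  have : c0 * ln (L%:R : R) < c0 * (L%:R / (2 * c0) + ln (2 * c0)).
    by rewrite ltr_pM2l //; lra.
  have -> : c0 * (L%:R / (2 * c0) + ln (2 * c0)) = L%:R / 2 + c0 * ln (2 * c0).
    by field; lra.
  have : c0 * y <= c0 * ln (L%:R : R) by rewrite ler_pM2l //; lra.
  lra.
- have : (c0 * y) ^+ d <= s%:R ^+ d.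
    by rewrite lerXn2r ?nnegrE ?ler0n //; apply: ltW.
  rewrite exprMn yd => h; apply: le_trans h.
  by rewrite ler_wpM2r //; lra.
Qed.



Theorem lemma3 (R : realType) (st : stat) (d : nat) (beta mu : R)
  (theta : R -> R) :
  (0 < d)%N -> 0 < beta ->
  {within `[0, +oo[%classic, continuous theta} ->
  (forall x, 0 <= x -> 0 <= theta x) ->
  (forall x, 0 < x -> 0 < theta x) ->
  (st = Boson -> 0 < mu) ->
  (h_pm st d beta mu theta < +oo)%E ->
  exists c : R,
  forall (dT : measure_display) (T : measurableType dT)
    (P : probability T R) (K : nat -> Zd d -> T -> nat),
  (forall L n, measurable_fun setT (K L n)) ->
  mutually_independent P (fun i : nat * Zd d => K i.1 i.2) ->
  (forall L n k, (0 < L)%N ->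
     P (K L n @^-1` [set k]) = (site_pmf st (qL beta mu theta L n) k)%:E) ->
  {ae P, forall t,
     (limn_esup (fun L => @RL_ratio R d L (fun n => K L n t)) <= c%:E)%E}.
Proof.
move=> d0 b0 cth th0 thpos hmu _.
set M : R := 2 * d%:R.
have M0 : 0 <= M by rewrite /M mulr_ge0 ?ler0n.
have cM : {within `[0, M], continuous theta}.
  apply: continuous_subspaceW cth => x /=; rewrite !in_itv /= => /andP[-> _] //.
have [c1 c1in Hmax] := EVT_max M0 cM.
set Th := theta c1.
have thb : forall x, 0 <= x <= M -> 0 <= theta x <= Th.
  move=> x hx; have /andP[hx1 hx2] := hx.
  by rewrite th0 //=; apply: Hmax; rewrite in_itv /= hx.
have Th0 : 0 <= Th.
  have h0 : (0 : R) <= 0 <= M by apply/andP; split.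
  by have /andP[a b] := thb 0 h0; exact: le_trans a b.
set qlo := expR (- (beta * (Th + mu))).
set qhi := expR (- (beta * mu)).
have qlo0 : 0 < qlo by apply: expR_gt0.
have qlh : qlo <= qhi by rewrite ler_expR lerN2 ler_pM2l //; lra.
have hB : st = Boson -> qhi < 1.
  by move=> /hmu m0; rewrite expR_lt1 oppr_lt0 mulr_gt0.
have [del del0 Hdel] := pmf_bound _ _ _ _ qlo0 qlh hB.
have Hs : forall x, 0 <= x <= 2 * d%:R ->
    del <= site_pmf st (expR (- (beta * (theta x + mu)))) 0 <= 1 - del.
  move=> x hx; apply: Hdel; have /andP[t0 t1] := thb x hx.
  by apply/andP; split; rewrite ler_expR lerN2 ler_pM2l //; lra.
have dhalf : del <= 1 - del.
  have h0 : qlo <= qlo <= qhi by apply/andP; split.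
  by have /andP[a b] := Hdel qlo h0; lra.
set gam := 1 - del.
have g01 : 0 < gam < 1 by apply/andP; split; rewrite /gam; lra.
set lam := - ln gam.
have lam0 : 0 < lam by rewrite /lam oppr_gt0 ln_lt0.
set c0 := Num.max 1 ((4 * d%:R + 4) / lam).
have c01 : 1 <= c0 by rewrite le_max lexx.
have c0lam : 4 * d%:R + 4 <= c0 * (- ln gam).
  have : (4 * d%:R + 4) / lam <= c0 by rewrite le_max lexx orbT.
  by rewrite ler_pdivrMr.
set Th1 := 2 * (c0 * ln (2 * c0) + 1) + expR 1.
have Th12 : 2 < Th1.
  have := expR_ge1Dx (1 : R); have : 0 <= ln (2 * c0) by apply: ln_ge0; lra.
  move=> h1 h2; have : 0 <= c0 * ln (2 * c0) by apply: mulr_ge0 => //; lra.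
  rewrite /Th1; lra.
set L0 := (Num.truncn Th1).+1.
have hL0 : forall L, (L0 <= L)%N -> Th1 < L%:R.
  by move=> L hL; apply: lt_le_trans (truncnS_gt Th1) _; rewrite ler_nat.
exists (c0 + 1).
move=> dT T P K mK ind pmf.
pose sL (L : nat) := (Num.truncn (c0 * (ln (L%:R : R)) `^ (d%:R^-1))).+1.
pose G (L : nat) : set T := if (L0 <= L)%N then
   \big[setU/set0]_(bb : ({ffun 'I_d -> 'I_L} * {ffun 'I_d -> 'I_L})%type | bb.1 != bb.2)
     PairE d dT T (K L) (psu d (sL L) (emb d L bb.1) (emb d L bb.2)) else set0.
have GB : forall L, measurable (G L) /\
    (P (G L) <= (if (L0 <= L)%N then (L%:R ^+ 2)^-1 else 0)%:E)%E.
  move=> L; rewrite /G; case: ifP => hL; last by rewrite measure0; split.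
  have hT := hL0 L hL.
  have [lnL1 y1 sLL hs _] := L_facts R c0 d d0 c01 L hT.
  have L0' : (0 < L)%N by rewrite -(ltr0n R); lra.
  apply: (G_bound _ _ _ _ _ _ _ _ _ _ _ _ _ mK ind pmf L0' sLL del0 Hs).
  move=> n hn; apply: (gam_bound _ _ _ _ _ _ _ g01 L0' _ c0lam hs hn); lra.
have mG : forall L, measurable (G L) by move=> L; exact: (GB L).1.
have sumG : (\sum_(n <oo) P (G n) < +oo)%E.
  apply: (@le_lt_trans _ _ 4%:E); last exact: ltry.
  apply: lime_le; first by apply: is_cvg_nneseries => n _ _; apply: measure_ge0.
  apply: nearW => N.
  apply: (@le_trans _ _ (\sum_(0 <= n < N) (4 * ((n.+1%:R)^-1 - (n.+2%:R)^-1))%:E)%E).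
    apply: lee_sum => n _; apply: le_trans (GB n).2 _; rewrite lee_fin.
    have n1 : 0 < (n.+1%:R : R) by rewrite ltr0n.
    have n2 : 0 < (n.+2%:R : R) by rewrite ltr0n.
    have e : 4 * ((n.+1%:R)^-1 - (n.+2%:R)^-1) = 4 / (n.+1%:R * n.+2%:R) :> R.
      by field; apply/andP; split; rewrite gt_eqF.
    rewrite e; case: ifP => hn; last by rewrite divr_ge0 //; apply: mulr_ge0; lra.
    have nn : 2 < (n%:R : R) by apply: lt_trans (hL0 n hn).
    rewrite ler_pdivlMr; last exact: mulr_gt0.
    rewrite mulrC ler_pdivrMr; last by apply: exprn_gt0; lra.
    rewrite -addn1 -addn2 !natrD; nra.
  rewrite sumEFin lee_fin.
  pose f (k : nat) : R := - 4 * (k.+1%:R)^-1.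
  rewrite (eq_bigr (fun k => f k.+1 - f k)); last by move=> k _; rewrite /f; ring.
  rewrite telescope_sumr // /f.
  have h : 0 <= 4 / (N.+1%:R : R) by rewrite divr_ge0 ?ler0n.
  by rewrite invr1 mulr1 mulNr opprK gerDr oppr_le0.
have P0 : P (lim_sup_set G) = 0%E by apply: lim_sup_set_cvg0.
exists (lim_sup_set G); split => //.
  by apply: bigcap_measurable => // k _; apply: bigcup_measurable => j _; exact: mG.
move=> t /=; apply: contra_notP => nN.
have [m hm] : exists m, forall j, (m <= j)%N -> ~ G j t.
  apply: contrapT => H; apply: nN => n _.
  apply: contrapT => H2; apply: H; exists n => j nj Gj; apply: H2; by exists j.
rewrite limn_esup_lim; apply: lime_le; first exact: is_cvg_esups.
near=> n.
have mn : (maxn m L0 <= n)%N by near: n; exact: nbhs_infty_ge.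
apply: ge_ereal_sup => _ [L /= nL <-].
have hL : (L0 <= L)%N by apply: leq_trans nL; apply: leq_trans mn; apply: leq_maxr.
have hmL : (m <= L)%N by apply: leq_trans nL; apply: leq_trans mn; apply: leq_maxl.
have nG := hm L hmL.
have hT := hL0 L hL.
have [lnL1 y1 sLL hs s2] := L_facts R c0 d d0 c01 L hT.
have L0' : (0 < L)%N by rewrite -(ltr0n R); lra.
rewrite /RL_ratio.
have sup_le : (ereal_sup [set RL R L u (fun n => K L n t) | u in box (one_vec d) L]
    <= ((sL L)%:R)%:E)%E.
  apply: ge_ereal_sup => _ [u ub <-].
  apply: ereal_inf_lbound; exists (sL L) => //; split => // v vb vu sw.
  apply: nG; rewrite /G hL.
  have [b1 e1] := box_emb _ _ _ ub; have [b2 e2] := box_emb _ _ _ vb.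
  have ne : b1 != b2 by apply/eqP => e; apply: vu; rewrite e1 e2 e.
  rewrite (bigD1 (b1, b2)) //=; left.
  rewrite /psu -e1 -e2; case: pickP => [i0 hi0|hn]; last first.
    exfalso; apply: vu; apply/ffunP => i; apply/esym.
    by have := hn i; move/negbFE/eqP.
  apply/(bigI_mem _ _) => p /mapP[j jin ->] /=; rewrite /pev /zs.
  have := sw (toZ d (sL L) j); rewrite /= => ->; first by [].
  move=> i; rewrite ffunE; have := ltn_ord (j i).
  move: (nat_of_ord (j i)) => a h; split => //.
  by rewrite lerBrDr -[(1:int)]/(Posz 1) -PoszD lez_nat addn1.
apply: le_trans (lee_wpmul2r _ sup_le) _.
  by rewrite lee_fin invr_ge0; exact: powR_ge0.
rewrite -EFinM lee_fin ler_pdivrMr; last lra.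
have s2' : (sL L)%:R <= c0 * (ln (L%:R : R)) `^ (d%:R^-1) + 1 := s2.
by apply: le_trans s2' _; rewrite mulrDl mul1r lerD2l.
Unshelve. all: by end_near.
Qed.
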